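(* Let $\eta>0$, $L>0$, and for each $t$ let $\widehat\varphi_t$ be a convex function with $C\subset\operatorname{dom}\partial\widehat\varphi_t$ whose subdifferential is $L$-Lipschitz on $C$, i.e. $\|g-h\|\le L\|x-y\|$ for all $x,y\in C$, $g\in\partial\widehat\varphi_t(x)$, $h\in\partial\widehat\varphi_t(y)$. Run OGP: $\widetilde{x}_{t+1}=P_C(\widetilde{x}_t-\eta x_t^* )$ with $x_t^*\in\partial\varphi_t(x_t)$, $x_{t+1}=P_C(\widetilde{x}_{t+1}-\eta\widehat{x}_{t+1}^* )$, $\widetilde x_1\in C$, with predictions $\widehat{x}_t^*\in\partial\widehat\varphi_t(\widetilde{x}_t)$. Then for every $T\ge1$ and every $z_1,\dots,z_T\in C$, with $P_T=\sum_{t=2}^T\|z_t-z_{t-1}\|$, $$\sum_{t=1}^T\varphi_t(x_t)-\varphi_t(z_t)\le \frac{\rho(\rho+2P_T)}{2\eta}+\eta\sum_{t=1}^T\Big(\sup_{x\in C,\ g\in\partial\varphi_t(x),\ \widehat g\in\partial\widehat\varphi_t(x)}\|g-\widehat g\|^2+\mathbf 1\{\eta>\tfrac{1}{\sqrt2 L}\}\,L^2\|x_t-\widetilde{x}_t\|^2\Big).$$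
   Context: $H$ is a real Hilbert space; $C\subset H$ is nonempty, closed, convex with diameter $\rho=\sup_{x,y\in C}\|x-y\|<\infty$; $P_C$ is the metric projection onto $C$; each loss $\varphi_t$ is convex with $C\subset\operatorname{dom}\partial\varphi_t$; $\mathbf 1\{\cdot\}$ is the zero-one indicator. *)

(* Defs.v *)
From HB Require Import structures.
From mathcomp Require Import all_boot all_order all_algebra.
From mathcomp Require Import all_classical all_reals all_analysis.
Set Implicit Arguments. Unset Strict Implicit. Unset Printing Implicit Defensive.
Import Order.TTheory GRing.Theory Num.Theory.
Import numFieldNormedType.Exports.
Local Open Scope classical_set_scope.
Local Open Scope ring_scope.

(* A real Hilbert space is a complete normed space whose norm comes from an
   inner product [ip]: [ip] is symmetric, linear in the first argument and
   [ip x x = `|x|^2]. *)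
Definition is_inner_product (R : realType) (H : completeNormedModType R)
    (ip : H -> H -> R) : Prop :=
  [/\ forall x y, ip x y = ip y x,
      forall (a : R) x y z, ip (a *: x + y) z = a * ip x z + ip y z
    & forall x, ip x x = `|x| ^+ 2].

Definition convex_set_H (R : realType) (H : completeNormedModType R)
    (C : set H) : Prop :=
  forall x y (l : R), C x -> C y -> 0 <= l <= 1 -> C (l *: x + (1 - l) *: y).

Definition convex_ext (R : realType) (H : completeNormedModType R)
    (f : H -> \bar R) : Prop :=
  (forall x, f x != -oo%E) /\
  forall (x y : H) (l : R), 0 < l < 1 ->
    (f (l *: x + (1 - l) *: y)%R <= l%:E * f x + (1 - l)%:E * f y)%E.

Definition subdiff (R : realType) (H : completeNormedModType R)
    (ip : H -> H -> R) (f : H -> \bar R) (x : H) : set H :=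
  [set g | f x \is a fin_num /\
           forall y, (f x + (ip g (y - x))%:E <= f y)%E].

Definition dom_subdiff (R : realType) (H : completeNormedModType R)
    (ip : H -> H -> R) (f : H -> \bar R) : set H :=
  [set x | subdiff ip f x !=set0].

Definition is_metric_projection (R : realType) (H : completeNormedModType R)
    (C : set H) (P : H -> H) : Prop :=
  forall x, C (P x) /\ forall y, C y -> `|x - P x| <= `|x - y|.

Definition diameter (R : realType) (H : completeNormedModType R)
    (C : set H) : \bar R :=
  ereal_sup [set e | exists x y, [/\ C x, C y & e = (`|x - y|)%:E]].

Definition pred_error (R : realType) (H : completeNormedModType R)
    (ip : H -> H -> R) (C : set H) (phi phih : H -> \bar R) : \bar R :=
  ereal_sup [set e | exists x g gh,
    [/\ C x, subdiff ip phi x g, subdiff ip phih x gh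
      & e = (`|g - gh| ^+ 2)%:E]].

(* Main.v *)
Require Import Defs.
From HB Require Import structures.
From mathcomp Require Import all_boot all_order all_algebra.
From mathcomp Require Import all_classical all_reals all_analysis.
From mathcomp Require Import ring lra.
Set Implicit Arguments. Unset Strict Implicit.
Import Order.TTheory GRing.Theory Num.Theory.
Import numFieldNormedType.Exports.
Local Open Scope classical_set_scope.
Local Open Scope ring_scope.

Lemma ipDl (R : realType) (H : completeNormedModType R) (ip : H -> H -> R) :
  is_inner_product ip -> forall x y z, ip (x + y) z = ip x z + ip y z.
Proof. by case=> _ lin _ x y z; rewrite -[x]scale1r lin mul1r scale1r. Qed.

Lemma ip0l (R : realType) (H : completeNormedModType R) (ip : H -> H -> R) :
  is_inner_product ip -> forall z, ip 0 z = 0.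
Proof.
move=> hip z; have := ipDl hip 0 0 z; rewrite addr0; lra.
Qed.

Lemma ipZl (R : realType) (H : completeNormedModType R) (ip : H -> H -> R) :
  is_inner_product ip -> forall a x z, ip (a *: x) z = a * ip x z.
Proof.
move=> hip a x z; have [_ lin _] := hip.
by have := lin a x 0 z; rewrite addr0 (ip0l hip) addr0.
Qed.

Lemma ipNl (R : realType) (H : completeNormedModType R) (ip : H -> H -> R) :
  is_inner_product ip -> forall x z, ip (- x) z = - ip x z.
Proof. by move=> hip x z; rewrite -scaleN1r (ipZl hip) mulN1r. Qed.

Lemma ipBl (R : realType) (H : completeNormedModType R) (ip : H -> H -> R) :
  is_inner_product ip -> forall x y z, ip (x - y) z = ip x z - ip y z.
Proof. by move=> hip x y z; rewrite (ipDl hip) (ipNl hip). Qed.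

Lemma ipDr (R : realType) (H : completeNormedModType R) (ip : H -> H -> R) :
  is_inner_product ip -> forall x y z, ip z (x + y) = ip z x + ip z y.
Proof. by move=> hip x y z; have [s _ _] := hip; rewrite !(s z) (ipDl hip). Qed.

Lemma ipBr (R : realType) (H : completeNormedModType R) (ip : H -> H -> R) :
  is_inner_product ip -> forall x y z, ip z (x - y) = ip z x - ip z y.
Proof. by move=> hip x y z; have [s _ _] := hip; rewrite !(s z) (ipBl hip). Qed.

Lemma ipZr (R : realType) (H : completeNormedModType R) (ip : H -> H -> R) :
  is_inner_product ip -> forall a x z, ip z (a *: x) = a * ip z x.
Proof. by move=> hip a x z; have [s _ _] := hip; rewrite !(s z) (ipZl hip). Qed.

Lemma normD2 (R : realType) (H : completeNormedModType R) (ip : H -> H -> R) :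
  is_inner_product ip -> forall a b : H,
  `|a + b| ^+ 2 = `|a| ^+ 2 + 2 * ip a b + `|b| ^+ 2.
Proof.
move=> hip a b; have [s _ sq] := hip.
rewrite -!sq (ipDl hip) !(ipDr hip) (s b a); lra.
Qed.

Lemma ipNr (R : realType) (H : completeNormedModType R) (ip : H -> H -> R) :
  is_inner_product ip -> forall x z, ip z (- x) = - ip z x.
Proof. by move=> hip x z; rewrite -scaleN1r (ipZr hip) mulN1r. Qed.

Lemma normB2 (R : realType) (H : completeNormedModType R) (ip : H -> H -> R) :
  is_inner_product ip -> forall a b : H,
  `|a - b| ^+ 2 = `|a| ^+ 2 - 2 * ip a b + `|b| ^+ 2.
Proof.
move=> hip a b; rewrite (normD2 hip) (ipNr hip) normrN; lra.
Qed.

Lemma proj_ineq (R : realType) (H : completeNormedModType R) (ip : H -> H -> R)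
  (C : set H) (P : H -> H) :
  is_inner_product ip -> convex_set_H C -> is_metric_projection C P ->
  forall y c, C c -> ip (y - P y) (c - P y) <= 0.
Proof.
move=> hip hC hP y c Cc.
have [CP Pmin] := hP y.
rewrite leNgt; apply/negP => ha.
set a := ip _ _ in ha.
set n := `|c - P y| ^+ 2.
have n0 : 0 <= n by rewrite /n sqr_ge0.
set l := a / (a + n).
have an0 : 0 < a + n by lra.
have hl : l * (a + n) = a by rewrite /l mulfVK // gt_eqF.
have l0 : 0 < l by rewrite /l divr_gt0.
have l1 : l <= 1 by rewrite /l ler_pdivrMr // mul1r; lra.
have Cq := hC c (P y) l Cc CP.
have := Pmin _ (Cq _); rewrite l1 ltW //= => /(_ isT) hle.
have e : y - (l *: c + (1 - l) *: P y) = (y - P y) - l *: (c - P y).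
  by rewrite scalerBl scale1r scalerBr addrCA opprD addrA.
rewrite e in hle.
have : `|y - P y| ^+ 2 <= `|y - P y - l *: (c - P y)| ^+ 2.
  by rewrite lerXn2r ?nnegrE ?normr_ge0.
rewrite (normB2 hip (y - P y)) normrZ exprMn -/n (ipZr hip) -/a gtr0_norm //.
nra.
Qed.

Lemma step_ineq (R : realType) (H : completeNormedModType R) (ip : H -> H -> R)
  (u u' w g gh z : H) (eta : R) :
  is_inner_product ip ->
  ip (u - eta *: g - u') (z - u') <= 0 ->
  ip (u - eta *: gh - w) (u' - w) <= 0 ->
  eta * ip g (w - z) <= (`|u - z| ^+ 2 - `|u' - z| ^+ 2) / 2
     - `|u - w| ^+ 2 / 2 + eta ^+ 2 * `|g - gh| ^+ 2 / 2.
Proof.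
move=> hip p1 p2.
have i1 : `|u - z| ^+ 2 = `|u - u'| ^+ 2 + 2 * ip (u - u') (u' - z) + `|u' - z| ^+ 2.
  by rewrite -(normD2 hip) addrA subrK.
have i2 : `|u - u'| ^+ 2 = `|u - w| ^+ 2 + 2 * ip (u - w) (w - u') + `|w - u'| ^+ 2.
  by rewrite -(normD2 hip) addrA subrK.
have i3 : 0 <= `|eta *: (g - gh) - (w - u')| ^+ 2 by rewrite sqr_ge0.
rewrite (normB2 hip) normrZ exprMn real_normK ?num_real // (ipZl hip) in i3.
have e1 : u - eta *: g - u' = (u - u') - eta *: g by rewrite addrAC.
rewrite e1 -(opprB u' z) (ipBl hip) (ipZl hip) !(ipNr hip) in p1.
have e2 : u - eta *: gh - w = (u - w) - eta *: gh by rewrite addrAC.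
rewrite e2 (ipBl hip) (ipZl hip) in p2.
have e3 : w - z = (w - u') + (u' - z) by rewrite addrA subrK.
rewrite e3 (ipDr hip).
have e4 : u' - w = - (w - u') by rewrite opprB.
rewrite e4 !(ipNr hip) in p2.
rewrite (ipBl hip) in i3.
lra.
Qed.

Lemma diam_le (R : realType) (H : completeNormedModType R) (C : set H) (rho : R) :
  diameter C = rho%:E -> forall a b, C a -> C b -> `|a - b| <= rho.
Proof.
move=> hd a b Ca Cb; rewrite -lee_fin -hd; apply: ereal_sup_ubound.
by exists a, b.
Qed.

Lemma pred_le (R : realType) (H : completeNormedModType R) (ip : H -> H -> R)
  (C : set H) (phi phih : H -> \bar R) y g gh :
  C y -> subdiff ip phi y g -> subdiff ip phih y gh ->
  ((`|g - gh| ^+ 2)%:E <= pred_error ip C phi phih)%E.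
Proof.
move=> Cy hg hgh; apply: ereal_sup_ubound; by exists y, g, gh.
Qed.

Lemma sq_diff_le (R : realType) (a b d rho : R) :
  0 <= a -> a <= rho -> 0 <= b -> b <= rho -> 0 <= d -> a <= b + d ->
  a ^+ 2 - b ^+ 2 <= 2 * rho * d.
Proof. move=> *; nra. Qed.

Lemma telesc (R : realType) (H : completeNormedModType R) (C : set H) (rho : R)
  (xt z : nat -> H) (T : nat) :
  diameter C = rho%:E -> (forall t, (0 < t)%N -> C (xt t)) ->
  (forall t, (1 <= t <= T)%N -> C (z t)) ->
  forall n, (1 <= n <= T)%N ->
  \sum_(1 <= t < n.+1) (`|xt t - z t| ^+ 2 - `|xt t.+1 - z t| ^+ 2)
  <= rho ^+ 2 + 2 * rho * \sum_(2 <= t < n.+1) `|z t - z t.-1|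
     - `|xt n.+1 - z n| ^+ 2.
Proof.
move=> hd xtC zC; elim=> [//|n IH] /andP[n1 nT].
have rho0 : 0 <= rho.
  by apply: le_trans (diam_le hd (xtC 1%N isT) (xtC 1%N isT)).
case: n IH n1 nT => [|n] IH _ nT.
  rewrite big_nat1 big_geq //.
  have := diam_le hd (xtC 1%N isT) (zC 1%N nT); rewrite mulr0 addr0 => h.
  have : `|xt 1%N - z 1%N| ^+ 2 <= rho ^+ 2.
    by rewrite lerXn2r ?nnegrE ?normr_ge0.
  lra.
have {IH} IH := IH (ltnW nT).
rewrite [X in X <= _]big_nat_recr // [X in _ <= _ + _ * X - _]big_nat_recr //=.
set S1 := \sum_(1 <= t < n.+2) _ in IH *.
set S2 := \sum_(2 <= t < n.+2) _ in IH *.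
have Ca := xtC n.+2 isT.
have zC2 : C (z n.+2) by apply: zC.
have zC1 : C (z n.+1) by apply: zC; rewrite /= ltnW.
have h := sq_diff_le (a := `|xt n.+2 - z n.+2|) (b := `|xt n.+2 - z n.+1|)
   (d := `|z n.+2 - z n.+1|) (rho := rho) (normr_ge0 _)
   (diam_le hd Ca zC2) (normr_ge0 _) (diam_le hd Ca zC1)
   (normr_ge0 _).
have : `|xt n.+2 - z n.+2| <= `|xt n.+2 - z n.+1| + `|z n.+2 - z n.+1|.
  rewrite (distrC (z n.+2)).
  have -> : xt n.+2 - z n.+2 = (xt n.+2 - z n.+1) + (z n.+1 - z n.+2).
    by rewrite addrA subrK.
  exact: ler_normD.
move/h => {}h.
lra.
Qed.

Lemma sq_tri (R : realType) (N1 N2 D L N : R) :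
  0 <= N -> 0 <= N1 -> 0 <= N2 -> 0 <= D -> 0 <= L -> N <= N1 + N2 -> N2 <= L * D ->
  N ^+ 2 <= 2 * N1 ^+ 2 + 2 * (L ^+ 2 * D ^+ 2).
Proof.
move=> N0 N10 N20 D0 L0 h1 h2.
have a1 : N ^+ 2 <= (N1 + N2) ^+ 2 by rewrite lerXn2r ?nnegrE ?addr_ge0.
have a2 : N2 ^+ 2 <= (L * D) ^+ 2 by rewrite lerXn2r ?nnegrE ?mulr_ge0.
rewrite exprMn in a2.
have a3 : 0 <= (N1 - N2) ^+ 2 by apply: sqr_ge0.
nra.
Qed.

Theorem corollary2 (R : realType) (H : completeNormedModType R)
  (ip : H -> H -> R) (C : set H) (PC : H -> H) (rho : R)
  (phi phih : nat -> H -> \bar R) (eta L : R)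
  (x xt xs xhs : nat -> H) :
  is_inner_product ip ->
  C !=set0 -> closed C -> convex_set_H C ->
  diameter C = rho%:E ->
  is_metric_projection C PC ->
  0 < eta -> 0 < L ->
  (forall t, (0 < t)%N -> convex_ext (phi t) /\ C `<=` dom_subdiff ip (phi t)) ->
  (forall t, (0 < t)%N -> convex_ext (phih t) /\ C `<=` dom_subdiff ip (phih t)) ->
  (forall t, (0 < t)%N -> forall y y' g h, C y -> C y' ->
     subdiff ip (phih t) y g -> subdiff ip (phih t) y' h ->
     `|g - h| <= L * `|y - y'|) ->
  C (xt 1%N) ->
  (forall t, (0 < t)%N -> subdiff ip (phi t) (x t) (xs t)) ->
  (forall t, (0 < t)%N -> subdiff ip (phih t) (xt t) (xhs t)) ->
  (forall t, (0 < t)%N -> xt t.+1 = PC (xt t - eta *: xs t)) ->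
  (forall t, (0 < t)%N -> x t = PC (xt t - eta *: xhs t)) ->
  forall (T : nat) (z : nat -> H), (1 <= T)%N ->
  (forall t, (1 <= t <= T)%N -> C (z t)) ->
  let PT := \sum_(2 <= t < T.+1) `|z t - z t.-1| in
  (\sum_(1 <= t < T.+1) (phi t (x t) - phi t (z t))
   <= (rho * (rho + 2 * PT) / (2 * eta))%:E
      + eta%:E * \sum_(1 <= t < T.+1)
          (pred_error ip C (phi t) (phih t)
           + ((if eta > (Num.sqrt 2 * L)^-1 then 1 else 0)
              * L ^+ 2 * `|x t - xt t| ^+ 2)%:E))%E.

Proof.
move=> hip Cne Ccl hC hd hP eta0 L0 hphi hphih hLip xt1 hxs hxhs hxt hx T z T1 zC.
cbv zeta.
set PT := \sum_(2 <= t < T.+1) `|z t - z t.-1|.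
have xtC : forall t, (0 < t)%N -> C (xt t).
  elim=> [//|[|t] IH] _; first exact: xt1.
  by rewrite hxt //; case: (hP (xt t.+1 - eta *: xs t.+1)).
have xC : forall t, (0 < t)%N -> C (x t).
  by move=> t t0; rewrite hx //; case: (hP (xt t - eta *: xhs t)).
have [h hh] : {h : nat -> H & forall t, (0 < t)%N -> subdiff ip (phih t) (x t) (h t)}.
  apply: (boolp.choice (P := fun t h => (0 < t)%N -> subdiff ip (phih t) (x t) h)).
  case=> [|t]; first by exists 0.
  have [_ sub] := hphih t.+1 isT.
  have [g hg] := sub _ (xC t.+1 isT); by exists g.
pose d t := fine (phi t (x t)) - fine (phi t (z t)).
pose e t := `|xs t - h t| ^+ 2.
pose c t := (if eta > (Num.sqrt 2 * L)^-1 then 1 else 0) * L ^+ 2 * `|x t - xt t| ^+ 2.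
pose A t := `|xt t - z t| ^+ 2 - `|xt t.+1 - z t| ^+ 2.
have key : forall t, (1 <= t <= T)%N -> eta * d t <= A t / 2 + eta ^+ 2 * (e t + c t).
  move=> t /andP[t1 tT].
  have t0 : (0 < t)%N := t1.
  have [fx sgx] := hxs t t0.
  have zCt : C (z t) by apply: zC; rewrite t1 tT.
  have [_ subz] := hphi t t0.
  have [gz [fz _]] := subz _ zCt.
  have hd1 : d t <= ip (xs t) (x t - z t).
    have := sgx (z t); rewrite -(fineK fx) -(fineK fz) -EFinD lee_fin.
    rewrite -(opprB (x t) (z t)) (ipNr hip) /d; lra.
  have p1 := proj_ineq hip hC hP (xt t - eta *: xs t) zCt.
  rewrite -hxt // in p1.
  have p2 := proj_ineq hip hC hP (xt t - eta *: xhs t) (xtC t.+1 isT).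
  rewrite -hx // in p2.
  have st := step_ineq hip p1 p2.
  have hL := hLip t t0 (x t) (xt t) (h t) (xhs t) (xC t t0) (xtC t t0) (hh t t0) (hxhs t t0).
  have tri := ler_distD (h t) (xs t) (xhs t).
  rewrite (distrC (xt t) (x t)) in st.
  have hN := sq_tri (normr_ge0 (xs t - xhs t)) (normr_ge0 (xs t - h t)) (normr_ge0 (h t - xhs t))
    (normr_ge0 (x t - xt t)) (ltW L0) tri hL.
  have hN' := ler_wpM2l (sqr_ge0 eta) hN.
  have hind : (eta ^+ 2 * L ^+ 2 - 1 / 2) * `|x t - xt t| ^+ 2
      <= eta ^+ 2 * c t.
    rewrite /c; have s0 := sqr_ge0 `|x t - xt t|.
    case: ifP => hgt.
      nra.
    move/negbT: hgt; rewrite -leNgt => hle.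
    have sq0 : 0 < Num.sqrt 2 :> R by rewrite sqrtr_gt0.
    have : eta * (Num.sqrt 2 * L) <= 1.
      by rewrite -ler_pdivlMr ?mulr_gt0 // div1r.
    move=> h1.
    have h2 : (eta * (Num.sqrt 2 * L)) ^+ 2 <= 1.
      have a0 : 0 <= eta * (Num.sqrt 2 * L) by rewrite !mulr_ge0 // ltW.
      nra.
    rewrite !exprMn sqr_sqrtr // in h2.
    nra.
  have hd2 := ler_wpM2l (ltW eta0) hd1.
  rewrite /A /e; lra.
have sumk : eta * \sum_(1 <= t < T.+1) d t
    <= (rho ^+ 2 + 2 * rho * PT) / 2 + eta ^+ 2 * \sum_(1 <= t < T.+1) (e t + c t).
  rewrite mulr_sumr.
  have sk := ler_sum_nat (m := 1%N) (n := T.+1) (F := fun t => eta * d t)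
    (G := fun t => A t / 2 + eta ^+ 2 * (e t + c t)) key.
  apply: le_trans sk _.
  rewrite big_split /= -mulr_suml -mulr_sumr.
  have tl := telesc hd xtC zC (n := T) (introT andP (conj T1 (leqnn T))).
  rewrite -/PT in tl.
  have := sqr_ge0 `|xt T.+1 - z T|.
  rewrite /A; lra.
have sumd : \sum_(1 <= t < T.+1) d t
    <= rho * (rho + 2 * PT) / (2 * eta) + eta * \sum_(1 <= t < T.+1) (e t + c t).
  rewrite -(ler_pM2l eta0); apply: le_trans sumk _.
  rewrite le_eqVlt; apply/orP; left; apply/eqP; field.
  by rewrite gt_eqF.
have lhs : \sum_(1 <= t < T.+1) (phi t (x t) - phi t (z t))%E
    = (\sum_(1 <= t < T.+1) d t)%:E.
  rewrite -sumEFin; apply: eq_big_nat => t /andP[t1 tT].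
  have t0 : (0 < t)%N := t1.
  have [fx _] := hxs t t0.
  have zCt : C (z t) by apply: zC; rewrite t1.
  have [_ subz] := hphi t t0.
  have [gz [fz _]] := subz _ zCt.
  by rewrite /d EFinB !fineK.
rewrite lhs; apply: le_trans (_ : ((rho * (rho + 2 * PT) / (2 * eta))
    + eta * \sum_(1 <= t < T.+1) (e t + c t))%:E <= _)%E.
  by rewrite lee_fin.
rewrite EFinD EFinM; apply: leeD2l; rewrite EFinM; apply: lee_wpmul2l; first by rewrite lee_fin ltW.
rewrite -sumEFin big_nat_cond [X in (_ <= X)%E]big_nat_cond.
apply: lee_sum => t /andP[/andP[t1 tT] _].
have t0 : (0 < t)%N := t1.
rewrite EFinD; apply: leeD => //.
exact: pred_le (xC t t0) (hxs t t0) (hh t t0).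
Qed.
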